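(* Let $k\ge 3$, let $s_1,\dots,s_{k-1}$ be reals, and let $n=k$. If $x=(x_1,\dots,x_k)\in S_k$ is a local maximum of $x\mapsto\sum_{i=1}^k x_i^k$ on $S_k$, then there exists an integer $i$ with $1\le 2i<2i+1\le k$ and $x_{2i}=x_{2i+1}$. If $x\in S_k$ is a local minimum of this function on $S_k$, then there exists an integer $i$ with $1\le 2i-1<2i\le k$ and $x_{2i-1}=x_{2i}$.
   Context: For integers $k\ge 3$, $n\ge k$ and reals $s_1,\dots,s_{k-1}$, $S_k:=\{(x_1,\dots,x_n)\in\mathbb{R}^n : x_1\ge x_2\ge\cdots\ge x_n,\ \sum_{i=1}^n x_i^j=s_j\text{ for }j=1,\dots,k-1\}$ with the subspace topology from $\mathbb{R}^n$. *)

(* Defs.v *)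
From Stdlib Require Import Reals Lra Lia.
Open Scope R_scope.

(* Points of R^n are encoded as x : nat -> R, using 1-based indices 1..n
   (values outside 1..n are irrelevant). *)

Fixpoint psum (x : nat -> R) (m j : nat) : R :=
  match m with
  | O => 0
  | S m' => psum x m' j + x m ^ j
  end.

Definition inS (k n : nat) (s : nat -> R) (x : nat -> R) : Prop :=
  (forall i : nat, (1 <= i < n)%nat -> x (S i) <= x i) /\
  (forall j : nat, (1 <= j <= k - 1)%nat -> psum x n j = s j).

(* x is a local maximum of y |-> sum_{i=1}^n y_i^k on S_k (subspace topology
   of R^n, neighbourhoods given by sup-norm balls). *)
Definition is_local_max_S (k n : nat) (s : nat -> R) (x : nat -> R) : Prop :=
  inS k n s x /\
  exists eps : R, 0 < eps /\
    forall y : nat -> R, inS k n s y ->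
      (forall i : nat, (1 <= i <= n)%nat -> Rabs (y i - x i) < eps) ->
      psum y n k <= psum x n k.

Definition is_local_min_S (k n : nat) (s : nat -> R) (x : nat -> R) : Prop :=
  inS k n s x /\
  exists eps : R, 0 < eps /\
    forall y : nat -> R, inS k n s y ->
      (forall i : nat, (1 <= i <= n)%nat -> Rabs (y i - x i) < eps) ->
      psum x n k <= psum y n k.

(* Main.v *)
Require Import Defs.
From Stdlib Require Import Reals Lra Lia.
Open Scope R_scope.
Module MC.
From HB Require Import structures.
From mathcomp Require Import all_boot all_order all_algebra.
From mathcomp Require Import zify ring lra Rstruct.
From mathcomp.real_closed Require Import polyrcf.
From Stdlib Require Import ClassicalEpsilon.
From Stdlib Require Import Classical.
Set Implicit Arguments. Unset Strict Implicit. Unset Printing Implicit Defensive.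
Import Order.TTheory GRing.Theory Num.Theory.
Local Open Scope ring_scope.

Section Newton.
Variable R : comNzRingType.
Implicit Types (z : nat -> R).

Definition gp z n : {poly R} := \prod_(i < n) ('X - (z i)%:P).
Definition pw z n j : R := \sum_(i < n) z i ^+ j.
Fixpoint hp z j n : {poly R} := match n with
  | 0 => 0 | n'.+1 => hp z j n' * ('X - (z n')%:P) + z n' ^+ j *: gp z n' end.

Lemma gpS z n : gp z n.+1 = gp z n * ('X - (z n)%:P).
Proof. by rewrite /gp big_ord_recr. Qed.

Lemma size_gp z n : size (gp z n) = n.+1.
Proof. by rewrite /gp size_prod_XsubC /index_enum unlock -enumT size_enum_ord. Qed.

Lemma gp_monic z n : gp z n \is monic.
Proof. exact: monic_prod_XsubC. Qed.

Lemma gp_lead z n : (gp z n)`_n = 1.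
Proof. by have := gp_monic z n; move/monicP; rewrite /lead_coef size_gp. Qed.

Lemma hp_prop z j n : (size (hp z j n) <= n)%N /\ (hp z j n)`_n.-1 = pw z n j.
Proof.
elim: n => [|n [Hs Hc]] /=; first by rewrite size_poly0 coef0 /pw big_ord0.
split.
  rewrite (leq_trans (size_add _ _)) // geq_max; apply/andP; split.
    rewrite (leq_trans (size_mul_leq _ _)) // size_XsubC addn2 /=.
    by case: (size _) Hs.
  by rewrite (leq_trans (size_scale_leq _ _)) // size_gp.
rewrite coefD coefZ gp_lead mulr1 mulrBr coefB coefMC coefMX.
rewrite (nth_default _ Hs) mul0r subr0 /pw big_ord_recr /=; congr (_ + _).
case: n Hs Hc => [|n] //= Hs _; by rewrite big_ord0.
Qed.

Definition Sp z n j : {poly R} := \sum_(m < j) pw z n m *: 'X^(j.-1 - m).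

Lemma XsubXX (c : R) j :
  'X^j - (c ^+ j)%:P = ('X - c%:P) * \sum_(m < j) c ^+ m *: 'X^(j.-1 - m).
Proof.
rewrite rmorphXn subrXX; congr (_ * _); apply: eq_bigr => i _.
by rewrite -rmorphXn mulrC mul_polyC. Qed.

Lemma hp_deriv z j n : 'X^j * (gp z n)^`() = hp z j n + gp z n * Sp z n j.
Proof.
elim: n => [|n IH].
  rewrite /gp big_ord0 derivC mulr0 /= /Sp mul1r.
  rewrite big1 ?add0r // => i _; by rewrite /pw big_ord0 scale0r.
rewrite gpS derivM derivXsubC mulr1 /=.
have ES : Sp z n.+1 j = Sp z n j + \sum_(m < j) z n ^+ m *: 'X^(j.-1 - m).
  rewrite /Sp -big_split /=; apply: eq_bigr => i _.
  by rewrite /pw big_ord_recr /= scalerDl.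
have E := XsubXX (z n) j.
move: E IH; set T := \sum_(m < j) _; set G := gp z n; set X1 := ('X - (z n)%:P).
set G' := G^`(); set H := hp z j n; set S := Sp z n j => E IH.
rewrite ES -mul_polyC.
have -> : G * X1 * (S + T) = G * X1 * S + G * (X1 * T) by ring.
rewrite -E.
have -> : 'X^j * (G' * X1 + G) = ('X^j * G') * X1 + 'X^j * G by ring.
rewrite IH. ring.
Qed.

Lemma newton z n j : (j <= n)%N ->
  pw z n j + \sum_(m < j) pw z n m * (gp z n)`_(n - j + m) =
  (gp z n)`_(n - j) *+ (n - j).
Proof.
move=> Hjn.
case: n Hjn => [|n] Hjn.
  have -> : j = 0%N by lia.
  by rewrite big_ord0 /pw big_ord0 addr0 mulr0n.
have := congr1 (fun p : {poly R} => p`_n) (hp_deriv z j n.+1).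
rewrite coefXnM coefD (proj2 (hp_prop z j n.+1)) /= /Sp mulr_sumr coef_sum.
move=> E.
have -> : (gp z n.+1)`_(n.+1 - j) *+ (n.+1 - j) = pw z n.+1 j +
   \sum_(i < j) ((gp z n.+1) * (pw z n.+1 i *: 'X^(j.-1 - i)))`_n.
  rewrite -E; case: ltnP => Hnj.
    have -> : (n.+1 - j = 0)%N by lia. by rewrite mulr0n.
  rewrite coef_deriv; have -> : ((n - j).+1 = n.+1 - j)%N by lia. done.
congr (_ + _); apply: eq_bigr => i _.
rewrite -scalerAr coefZ coefMXn; case: ltnP => H; first by have := ltn_ord i; lia.
have := ltn_ord i => Hi; congr (_ * _); congr (_`_ _); lia.
Qed.

Lemma pw0 z n : pw z n 0 = n%:R.
Proof. by rewrite /pw (eq_bigr (fun _ => 1)) ?sumr_const ?card_ord // => i _; rewrite expr0. Qed.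

Lemma ps_eq z w n c : (0 < n)%N -> gp w n = gp z n + c%:P ->
  (forall j, (j < n)%N -> pw w n j = pw z n j) /\ pw w n n = pw z n n - c *+ n.
Proof.
move=> Hn Eg.
have Ha : forall i, (0 < i)%N -> (gp w n)`_i = (gp z n)`_i.
  by move=> i Hi; rewrite Eg coefD coefC; case: i Hi => // i _; rewrite addr0.
have Hlow : forall j, (j < n)%N -> pw w n j = pw z n j.
  elim/ltn_ind => j IH Hj.
  have Nw := newton w (ltnW Hj); have Nz := newton z (ltnW Hj).
  rewrite Ha in Nw; last by lia.
  have ES : \sum_(m < j) pw w n m * (gp w n)`_(n - j + m) =
            \sum_(m < j) pw z n m * (gp z n)`_(n - j + m).
    apply: eq_bigr => i _; have Hi := ltn_ord i.
    by rewrite IH ?Ha //; lia.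
  rewrite ES -Nz in Nw; exact: (addIr _ Nw).
split => //.
have Nw := newton w (leqnn n); have Nz := newton z (leqnn n).
rewrite subnn mulr0n in Nw Nz.
case: n Hn Eg Ha Hlow Nw Nz => // n _ Eg Ha Hlow Nw Nz.
rewrite big_ord_recl /= in Nw; rewrite big_ord_recl /= in Nz.
rewrite ?add0n ?mulr0n in Nw Nz.
have ES : \sum_(i < n) pw w n.+1 (bump 0 i) * (gp w n.+1)`_(bump 0 i) =
          \sum_(i < n) pw z n.+1 (bump 0 i) * (gp z n.+1)`_(bump 0 i).
  apply: eq_bigr => i _; have Hi := ltn_ord i.
  by rewrite Hlow ?Ha //; rewrite /bump /=; lia.
rewrite ES !pw0 Eg coefD coefC /= in Nw Nz.
move: Nw Nz; set S := \sum_(i < n) _ => Nw Nz.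
have -> : pw w n.+1 n.+1 = - (n.+1%:R * ((gp z n.+1)`_0 + c) + S).
  by apply/eqP; rewrite -subr_eq0 opprK Nw.
have -> : pw z n.+1 n.+1 = - (n.+1%:R * ((gp z n.+1)`_0) + S).
  by apply/eqP; rewrite -subr_eq0 opprK Nz.
rewrite -mulr_natr; ring.
Qed.
End Newton.


Section Sign.
Variable R : rcfType.
Implicit Types (z : nat -> R).

Lemma sign1 z m t : (forall i, (i < m)%N -> t < z i) ->
  0 < (-1) ^+ m * \prod_(i < m) (t - z i).
Proof.
elim: m => [|m IH] H; first by rewrite big_ord0 expr0 mulr1.
rewrite big_ord_recr /= exprS.
have H1 : 0 < (-1) ^+ m * \prod_(i < m) (t - z i) by apply: IH => i Hi; apply: H; lia.
have H2 : t < z m by apply: H.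
have -> : -1 * (-1) ^+ m * ((\prod_(i < m) (t - z i)) * (t - z m)) =
   ((-1) ^+ m * \prod_(i < m) (t - z i)) * (z m - t) by ring.
apply: mulr_gt0 => //; by rewrite subr_gt0.
Qed.

Lemma sign2 z m n t : (forall i, (m <= i < m + n)%N -> z i < t) ->
  0 < \prod_(i < n) (t - z (m + i)%N).
Proof.
elim: n => [|n IH] H; first by rewrite big_ord0.
rewrite big_ord_recr /=; apply: mulr_gt0.
  by apply: IH => i Hi; apply: H; lia.
by rewrite subr_gt0; apply: H; lia.
Qed.

Lemma sign_prod z n m t : (m <= n)%N -> (forall i, (i < m)%N -> t < z i) ->
  (forall i, (m <= i < n)%N -> z i < t) ->
  0 < (-1) ^+ m * \prod_(i < n) (t - z i).
Proof.
move=> Hmn H1 H2.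
rewrite -(subnKC Hmn) big_split_ord /= mulrA.
apply: mulr_gt0; first exact: sign1.
by apply: sign2 => i Hi; apply: H2; lia.
Qed.
End Sign.


Lemma fmin (R : realFieldType) (P : nat -> R) n : (forall i, (i < n)%N -> 0 < P i) ->
  exists r, 0 < r /\ forall i, (i < n)%N -> r < P i.
Proof.
elim: n => [|n IH] H; first by exists 1.
have [r [Hr Hri]] : exists r, 0 < r /\ forall i, (i < n)%N -> r < P i.
  by apply: IH => i Hi; apply: H; lia.
have Pn : 0 < P n by apply: H.
exists (Num.min r (P n / 2)); split.
  by rewrite lt_min Hr divr_gt0.
move=> i Hi; rewrite gt_min; case: (ltnP i n) => Hin.
  by rewrite Hri.
have -> : i = n by lia.
apply/orP; right; lra.
Qed.

Section Core.
Variable R : rcfType.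
Variable k : nat.
Variable x : nat -> R.
Hypothesis Hk : (1 <= k)%N.
Hypothesis Hsort : forall i, (1 <= i < k)%N -> x i.+1 <= x i.

Definition xs := fun i => x i.+1.
Definition G := gp xs k.

Lemma mono i j : (1 <= i)%N -> (i <= j)%N -> (j <= k)%N -> x j <= x i.
Proof.
move=> Hi Hij Hj; elim: j Hij Hj => [|j IH] Hij Hj; first lia.
case: (ltnP i j.+1) => H.
  apply: le_trans (Hsort _) _; first lia. by apply: IH; lia.
by have -> : j.+1 = i by lia.
Qed.

Lemma G_horner t : G.[t] = \prod_(i < k) (t - x i.+1).
Proof. by rewrite /G /gp horner_prod; apply: eq_bigr => i _; rewrite hornerXsubC. Qed.

Lemma signAt m t : (m <= k)%N -> (m = 0%N \/ t < x m) -> (m = k \/ x m.+1 < t) ->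
  0 < (-1) ^+ m * G.[t].
Proof.
move=> Hm H1 H2; rewrite G_horner; apply: (@sign_prod R (fun i => x i.+1) k m t) => // i Hi /=.
  case: H1 => [|H1]; first lia.
  apply: lt_le_trans H1 _; apply: mono; lia.
case: H2 => [|H2]; first lia.
apply: le_lt_trans _ H2; apply: mono; lia.
Qed.

Lemma G_root m : (1 <= m <= k)%N -> G.[x m] = 0.
Proof.
move=> Hm; rewrite G_horner.
have Hm' : (m.-1 < k)%N by lia.
rewrite (bigD1 (Ordinal Hm')) //= prednK; last lia.
by rewrite subrr mul0r.
Qed.

Lemma sgn_pred (m : nat) : (1 <= m)%N ->
  (-1) ^+ m.-1 = (if odd m then 1 else -1 : R).
Proof. by case: m => [|m] //= _; rewrite -signr_odd; case: (odd m); rewrite /= ?expr0 ?expr1. Qed.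

Lemma sgn (m : nat) : (-1) ^+ m = (if odd m then -1 else 1 : R).
Proof. by rewrite -signr_odd; case: (odd m); rewrite /= ?expr0 ?expr1. Qed.

Lemma absif (c : bool) (a : R) : 0 < (if c then a else - a) ->
  `|a| = (if c then a else - a) /\ a != 0.
Proof.
case: c => H; split.
- exact: gtr0_norm.
- by rewrite gt_eqF.
- by rewrite ltr0_norm // -oppr_gt0.
- by rewrite lt_eqF // -oppr_gt0.
Qed.

Lemma absif' (c : bool) (a : R) : 0 < (if c then - a else a) ->
  `|a| = (if c then - a else a) /\ a != 0.
Proof. by move=> H; have := absif (c := ~~ c) (a := a); case: c H => /= H; apply. Qed.

Lemma core (b : bool) (r0 : R) : 0 < r0 ->
  (forall m, (1 <= m < k)%N -> x m = x m.+1 -> odd m = b) ->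
  exists y : nat -> R, (forall i, (1 <= i < k)%N -> y i.+1 <= y i) /\
    (forall i, (1 <= i <= k)%N -> `|y i - x i| < r0) /\
    (forall j, (j < k)%N -> pw (fun i => y i.+1) k j = pw xs k j) /\
    (if b then pw xs k k < pw (fun i => y i.+1) k k
     else pw (fun i => y i.+1) k k < pw xs k k).
Proof.
move=> Hr0 Hb.
pose P i := if (i.+2 <= k)%N && (x i.+1 != x i.+2)
            then Num.min r0 ((x i.+1 - x i.+2) / 3) else r0.
have [r [Hr Hrp]] : exists r, 0 < r /\ forall i, (i < k)%N -> r < P i.
  apply: fmin => i Hi; rewrite /P; case: ifP => // /andP [H1 H2].
  rewrite lt_min Hr0 /= divr_gt0 // subr_gt0 lt_neqAle eq_sym H2 /=.
  apply: Hsort; lia.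
have Hrr0 : r < r0.
  have := Hrp 0%N Hk; rewrite /P; case: ifP => // _; rewrite lt_min => /andP[] //.
have Gap : forall m, (1 <= m < k)%N -> x m <> x m.+1 -> 3 * r < x m - x m.+1.
  move=> m Hm Hne; have := Hrp m.-1 ltac:(lia); rewrite /P prednK; last lia.
  have -> : (m.+1 <= k)%N by lia.
  have -> : (x m != x m.+1) by apply/eqP.
  rewrite lt_min => /andP [_ H]; lra.
have Fp : forall m, (1 <= m <= k)%N -> ~ ((2 <= m)%N /\ x m.-1 = x m) ->
    0 < (if odd m then G.[x m + r] else - G.[x m + r]).
  move=> m Hm Hn.
  have := @signAt m.-1 (x m + r) ltac:(lia) _ _.
  rewrite sgn_pred; last lia.
  case: (odd m); rewrite ?mul1r ?mulN1r; apply.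
  - case: (ltnP m 2) => H2; first by left; lia.
    right; have Hne : x m.-1 <> x m by move=> E; apply: Hn.
    have := Gap m.-1 ltac:(lia); rewrite prednK; last lia.
    move=> /(_ Hne); lra.
  - right; rewrite prednK; last lia. lra.
  - case: (ltnP m 2) => H2; first by left; lia.
    right; have Hne : x m.-1 <> x m by move=> E; apply: Hn.
    have := Gap m.-1 ltac:(lia); rewrite prednK; last lia.
    move=> /(_ Hne); lra.
  - right; rewrite prednK; last lia. lra.
have Fm : forall m, (1 <= m <= k)%N -> ~ ((m < k)%N /\ x m = x m.+1) ->
    0 < (if odd m then - G.[x m - r] else G.[x m - r]).
  move=> m Hm Hn.
  have := @signAt m (x m - r) ltac:(lia) _ _.
  rewrite sgn.
  have H1 : (m = 0%N \/ x m - r < x m) by right; lra.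
  have H2 : (m = k \/ x m.+1 < x m - r).
    case: (ltnP m k) => Hmk; last by left; lia.
    right; have Hne : x m <> x m.+1 by move=> E; apply: Hn.
    have := Gap m ltac:(lia) Hne; lra.
  case: (odd m); rewrite ?mul1r ?mulN1r; by apply.
have NT : forall m, (2 <= m)%N -> (m < k)%N -> x m.-1 = x m -> x m = x m.+1 -> False.
  move=> m H2 H3 E1 E2.
  have := Hb m.-1 ltac:(lia); rewrite prednK; last lia.
  move=> /(_ E1); have := Hb m ltac:(lia) E2.
  by case: m H2 {H3 E1 E2} => [|m] //= _ <-; case: (odd m).
have NZp : forall m, (1 <= m <= k)%N -> G.[x m + r] != 0.
  move=> m Hm; case: (boolP ((2 <= m)%N && (x m.-1 == x m))) => HA.
    move/andP: HA => [H2 /eqP E]; rewrite -E.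
    have Hm1 : (1 <= m.-1 <= k)%N by lia.
    apply: (proj2 (absif (Fp _ Hm1 _))) => -[H3 E2].
    apply: (NT m.-1) => //; first lia. by rewrite prednK //; lia.
  apply: (proj2 (absif (Fp _ Hm _))) => -[H2 E]; move: HA; rewrite H2 E eqxx //.
have NZm : forall m, (1 <= m <= k)%N -> G.[x m - r] != 0.
  move=> m Hm; case: (boolP ((m < k)%N && (x m == x m.+1))) => HB.
    move/andP: HB => [H2 /eqP E]; rewrite E.
    have Hm1 : (1 <= m.+1 <= k)%N by lia.
    apply: (proj2 (absif' (Fm _ Hm1 _))) => -[H3 E2].
    by apply: (NT m.+1) => //; lia.
  apply: (proj2 (absif' (Fm _ Hm _))) => -[H2 E]; move: HB; rewrite H2 E eqxx //.
pose Q i := Num.min `|G.[x i.+1 + r]| `|G.[x i.+1 - r]|.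
have [d [Hd Hdq]] : exists d, 0 < d /\ forall i, (i < k)%N -> d < Q i.
  apply: fmin => i Hi; rewrite /Q lt_min !normr_gt0 NZp ?NZm //; lia.
have Hdm : forall m, (1 <= m <= k)%N -> d < `|G.[x m + r]| /\ d < `|G.[x m - r]|.
  move=> m Hm; have := Hdq m.-1 ltac:(lia); rewrite /Q prednK; last lia.
  by rewrite lt_min => /andP.
pose c := if b then - d else d.
pose Pol := G + c%:P.
have PolE : forall t, Pol.[t] = G.[t] + c by move=> t; rewrite hornerD hornerC.
have Ex : forall m, exists y, (1 <= m <= k)%N -> [/\ root Pol y, x m - r < y, y < x m + r,
   ((2 <= m)%N && (x m.-1 == x m) -> y < x m) & ((m < k)%N && (x m == x m.+1) -> x m < y)].
  move=> m; case: (boolP (1 <= m <= k)%N) => Hm; last by exists 0.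
  have [Dp Dm] := Hdm m Hm.
  have G0 : G.[x m] = 0 by apply: G_root.
  case: (boolP ((2 <= m)%N && (x m.-1 == x m))) => HA.
  - move/andP: HA => [H2 /eqP E].
    have HnB : ~ ((m < k)%N /\ x m = x m.+1) by move=> [H3 E2]; apply: (NT m).
    have F := Fm m Hm HnB; have [Fa _] := absif' F.
    have Hpar : odd m = ~~ b.
      have Ho : odd m.-1 = b by apply: Hb; [lia | rewrite prednK //; lia].
      rewrite -Ho; clear -H2; by case: m H2 => [|m].
    have Hprod : Pol.[x m - r] * Pol.[x m] < 0.
      rewrite !PolE G0 add0r /c; rewrite Hpar in F Fa; rewrite Fa in Dm.
      destruct b; simpl in *; nra.
    have Hle : x m - r <= x m by lra.
    have [yy Hyy Hroot] := poly_ivtoo Hle Hprod.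
    exists yy => _; move: Hyy; rewrite in_itv /= => /andP [Ha Hb'].
    split => //; try lra.
    all: try by move=> /andP [H3 /eqP E2]; case: HnB.
  - have HnA : ~ ((2 <= m)%N /\ x m.-1 = x m).
      by move=> [H2 E]; move: HA; rewrite H2 E eqxx.
    have Fpm := Fp m Hm HnA; have [Fa _] := absif Fpm.
    case: (boolP ((m < k)%N && (x m == x m.+1))) => HB.
    + move/andP: HB => [H3 /eqP E].
      have Hpar : odd m = b by apply: Hb => //; lia.
      have Hprod : Pol.[x m] * Pol.[x m + r] < 0.
        rewrite !PolE G0 add0r /c; rewrite Hpar in Fpm Fa; rewrite Fa in Dp.
        destruct b; simpl in *; nra.
      have Hle : x m <= x m + r by lra.
      have [yy Hyy Hroot] := poly_ivtoo Hle Hprod.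
      exists yy => _; move: Hyy; rewrite in_itv /= => /andP [Ha Hb'].
      split => //; try lra.
      all: try by move/andP => [H2 /eqP E2]; case: HnA.
    + have HnB : ~ ((m < k)%N /\ x m = x m.+1).
        by move=> [H3 E]; move: HB; rewrite H3 E eqxx.
      have Fmm := Fm m Hm HnB; have [Fb _] := absif' Fmm.
      have Hprod : Pol.[x m - r] * Pol.[x m + r] < 0.
        rewrite !PolE /c; rewrite Fa in Dp; rewrite Fb in Dm.
        destruct (odd m); destruct b; simpl in *; nra.
      have Hle : x m - r <= x m + r by lra.
      have [yy Hyy Hroot] := poly_ivtoo Hle Hprod.
      exists yy => _; move: Hyy; rewrite in_itv /= => /andP [Ha Hb'].
      split => //; try lra.
      all: try by move/andP => [H2 /eqP E2]; case: HnA.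
      all: try by move/andP => [H2 /eqP E2]; case: HnB.
have [y Py] : exists y : nat -> R, forall m, (1 <= m <= k)%N ->
   [/\ root Pol (y m), x m - r < y m, y m < x m + r,
   ((2 <= m)%N && (x m.-1 == x m) -> y m < x m) & ((m < k)%N && (x m == x m.+1) -> x m < y m)].
  exists (fun m => proj1_sig (constructive_indefinite_description _ (Ex m))).
  by move=> m; exact: (proj2_sig (constructive_indefinite_description _ (Ex m))).
clear Ex.
have Sdec : forall m, (1 <= m < k)%N -> y m.+1 < y m.
  move=> m Hm; have Hm1 : (1 <= m.+1 <= k)%N by clear -Hm; lia.
  have [_ A1 A2 A3 A4] := Py m.+1 Hm1.
  have Hm2 : (1 <= m <= k)%N by clear -Hm; lia.
  have [_ B1 B2 B3 B4] := Py m Hm2.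
  case: (eqVneq (x m) (x m.+1)) => E.
    have Hc : (2 <= m.+1)%N && (x m == x m.+1).
      apply/andP; split; [by clear -Hm; lia | by apply/eqP].
    have H1 := A3 Hc.
    have Hc2 : (m < k)%N && (x m == x m.+1).
      apply/andP; split; [by clear -Hm; lia | by apply/eqP].
    have H2 := B4 Hc2.
    rewrite -E in H1; exact: lt_trans H1 H2.
  have HG := Gap m Hm (elimN eqP E); clear -HG A2 B1 Hr; lra.
have Smono : forall i j, (1 <= i)%N -> (i < j)%N -> (j <= k)%N -> y j < y i.
  move=> i j Hi; elim: j => [|j IH] Hij Hj; first by clear -Hij; lia.
  case: (ltnP i j) => H.
    apply: lt_trans (Sdec j _) (IH H _); clear -Hi H Hj; lia.
  have -> : i = j by clear -H Hij; lia.
  apply: Sdec; clear -Hi Hj H Hij; lia.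
pose rs := [seq y i.+1 | i <- index_iota 0 k].
have Egp : gp (fun i => y i.+1) k = Pol.
  have Hsz : (size (c%:P) < size G)%N.
    by rewrite /G size_gp; apply: leq_ltn_trans (size_polyC_leq1 _) _.
  have := @all_roots_prod_XsubC _ Pol rs _ _ _.
  rewrite /gp lead_coefDl // (monicP (gp_monic _ _)) scale1r /rs big_map big_mkord => <- //.
  - by rewrite size_polyDl // /G size_gp size_map /index_iota size_iota subn0.
  - apply/allP => t /mapP [i Hi ->]; rewrite mem_index_iota in Hi.
    have Hi' : (1 <= i.+1 <= k)%N by clear -Hi; lia.
    by have [] := Py i.+1 Hi'.
  - rewrite uniq_rootsE map_inj_in_uniq ?iota_uniq // => i j.
    rewrite !mem_index_iota => Hi Hj E.
    case: (ltngtP i j) => // H.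
    + have := Smono i.+1 j.+1 isT H ltac:(clear -Hj; lia); rewrite E; by rewrite ltxx.
    + have := Smono j.+1 i.+1 isT H ltac:(clear -Hi; lia); rewrite E; by rewrite ltxx.
have [Hlow Htop] := ps_eq Hk Egp.
exists y; split; [|split; [|split]].
- move=> i Hi; apply: ltW; exact: Sdec.
- move=> i Hi; have [_ H1 H2 _ _] := Py i Hi.
  rewrite ltr_norml; apply/andP; split; clear -H1 H2 Hrr0; lra.
- exact: Hlow.
- rewrite Htop /c; have Hdk : 0 < d *+ k by rewrite pmulrn_lgt0.
  case: (b) => /=; rewrite ?mulNrn ?opprK; move: Hdk; move: (d *+ k) => D0;
  move: (pw _ k k) => W Hdk; clear -Hdk; lra.
Qed.
End Core.


Lemma psum_pw (x : nat -> R) m j : psum x m j = pw (fun i => x i.+1) m j.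
Proof.
elim: m => [|m IH] /=; first by rewrite /pw big_ord0.
by rewrite IH RpowE /pw big_ord_recr. Qed.

Lemma to_core (k : nat) (s x : nat -> R) (b : bool) (eps : R) :
  (3 <= k)%coq_nat -> inS k k s x -> Rlt 0 eps ->
  (forall m, (1 <= m < k)%N -> x m = x m.+1 -> odd m = b) ->
  exists y, inS k k s y /\
    (forall i, (1 <= i)%coq_nat /\ (i <= k)%coq_nat -> Rlt (Rabs (Rminus (y i) (x i))) eps) /\
    (if b then Rlt (psum x k k) (psum y k k) else Rlt (psum y k k) (psum x k k)).
Proof.
move=> Hk [Hs Hp] Heps Hb.
have Hk1 : (1 <= k)%N by apply/ssrnat.leP; lia.
have Hsort : forall i, (1 <= i < k)%N -> x i.+1 <= x i.
  move=> i /andP [H1 H2]; apply/RleP; apply: Hs; split; apply/ssrnat.leP => //.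
have Heps' : 0 < eps by apply/RltP.
have [y [Hys [Hyn [Hyp Hyk]]]] := core Hk1 Hsort Heps' Hb.
exists y; split; [split|split].
- move=> i [H1 H2]; apply/RleP; apply: Hys; apply/andP; split; apply/ssrnat.leP => //.
- move=> j [H1 H2]; rewrite psum_pw Hyp -?psum_pw; first exact: Hp.
  apply/ssrnat.ltP; lia.
- move=> i [H1 H2]; apply/RltP; apply: Hyn; apply/andP; split; apply/ssrnat.leP => //.
- rewrite !psum_pw; case: b Hb Hyk => _ /= H; apply/RltP; exact: H.
Qed.

Lemma main (k : nat) (s x : nat -> R) :
  (3 <= k)%coq_nat ->
  (is_local_max_S k k s x ->
     exists i : nat, (1 <= 2 * i)%coq_nat /\ (2 * i < 2 * i + 1)%coq_nat /\
       (2 * i + 1 <= k)%coq_nat /\ x (2 * i)%coq_nat = x (2 * i + 1)%coq_nat) /\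
  (is_local_min_S k k s x ->
     exists i : nat, (1 <= 2 * i - 1)%coq_nat /\ (2 * i - 1 < 2 * i)%coq_nat /\
       (2 * i <= k)%coq_nat /\ x (2 * i - 1)%coq_nat = x (2 * i)%coq_nat).
Proof.
move=> Hk; split.
- move=> [HS [eps [Heps Hloc]]].
  apply: NNPP => Hno.
  have Hb : forall m, (1 <= m < k)%N -> x m = x m.+1 -> odd m = true.
    move=> m /andP [H1 H2] E; case Ho: (odd m) => //; exfalso; apply: Hno.
    have Hd := odd_double_half m; rewrite Ho add0n in Hd.
    exists m./2.
    have Hm : (2 * m./2)%coq_nat = m by clear -Hd; lia.
    have Hm1 : (2 * m./2 + 1)%coq_nat = m.+1 by clear -Hd; lia.
    rewrite Hm Hm1; split; [|split; [|split]] => //; clear -H1 H2 Hd; lia.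
  have [y [Hy [Hn Hgt]]] := to_core Hk HS Heps Hb.
  move: (Hloc y Hy Hn) => H; exact: (Rlt_not_le _ _ Hgt H).
- move=> [HS [eps [Heps Hloc]]].
  apply: NNPP => Hno.
  have Hb : forall m, (1 <= m < k)%N -> x m = x m.+1 -> odd m = false.
    move=> m /andP [H1 H2] E; case Ho: (odd m) => //; exfalso; apply: Hno.
    have Hd := odd_double_half m; rewrite Ho in Hd.
    exists (m./2).+1.
    have Hm : (2 * (m./2).+1 - 1)%coq_nat = m by clear -Hd; lia.
    have Hm1 : (2 * (m./2).+1)%coq_nat = m.+1 by clear -Hd; lia.
    rewrite Hm Hm1; split; [|split; [|split]] => //; clear -H1 H2 Hd; lia.
  have [y [Hy [Hn Hgt]]] := to_core Hk HS Heps Hb.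
  move: (Hloc y Hy Hn) => H; exact: (Rlt_not_le _ _ Hgt H).
Qed.
End MC.

Theorem mainTheorem13 (k : nat) (s : nat -> R) (x : nat -> R) :
  (3 <= k)%nat ->
  (is_local_max_S k k s x ->
     exists i : nat, (1 <= 2 * i)%nat /\ (2 * i < 2 * i + 1)%nat /\
       (2 * i + 1 <= k)%nat /\ x (2 * i)%nat = x (2 * i + 1)%nat) /\
  (is_local_min_S k k s x ->
     exists i : nat, (1 <= 2 * i - 1)%nat /\ (2 * i - 1 < 2 * i)%nat /\
       (2 * i <= k)%nat /\ x (2 * i - 1)%nat = x (2 * i)%nat).
Proof. exact (@MC.main k s x). Qed.
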